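(* Let $t$ be a positive integer. For every integer $n\ge8$ and every $n$-vertex induced subgraph $G$ of $\mathcal T(G_t)$ (hence in particular of $W_t$), there is a node $u$ of $T_t$ such that the number of descendants of $u$ in $T_t$ that belong to $V(G)$ is at least $\frac{n}{8\cdot 3^{t+1}}$ and at most $\frac n4$, and every node $v$ of $T_t$ in the same layer as $u$ has at most $\frac n4$ descendants in $V(G)$.
   Context: A node is its own descendant. Construction of $G_t$, $T_t$, $W_t$: a countably infinite trigraph $G_t$ (with disjoint sets of black and red edges; its total graph $\mathcal T(G_t)$ has all black and red edges, its real graph $W_t$ only the black ones) and rooted tree $T_t$ on the same vertex set, partitioned into finite layers $L_0,L_1,\dots$ each inducing a left-to-right path of black edges. $L_0$ is a single vertex, the root of $T_t$. With $L_{\le i}=L_0\cup\dots\cup L_i$, layer $L_{i+1}$ is built (starting empty) as follows: for each $u\in L_i$ from left to right, let $N^\uparrow[u]:=(N_{\mathcal T(G_t)}(u)\cap L_{\le i-1})\cup\{u\}$; for every ordered pair $(B,R)$ of disjoint subsets of $N^\uparrow[u]$ with $|B\cup R|\le t$, append a new vertex $v_{B,R}$ at the right end of $L_{i+1}$, joined by a black edge to the previously rightmost vertex of $L_{i+1}$ (if any), make it a child of $u$ in $T_t$, and add black edges from $v_{B,R}$ to all of $B$ and red edges to all of $R$. *)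

(* Defs.v *)
From mathcomp Require Import all_boot.
Set Implicit Arguments. Unset Strict Implicit. Unset Printing Implicit Defensive.

(* A vertex is the list of "choices" along the tree path from it up to the
   root, most recent choice first: the root is [::], and the child v_{B,R}
   of u is  l :: u  where l : seq nat is a label vector indexed by the
   (duplicate-free) sequence  up u  enumerating N^up[u]:
     label 0 = not in B∪R, label 1 = in B (black edge), label 2 = in R (red edge).
   The layer of a vertex is its size (depth in T_t). *)
Definition node := seq (seq nat).

(* up u enumerates N^up[u] = (N_{T(G_t)}(u) ∩ L_{<= i-1}) ∪ {u}, u ∈ L_i.
   The neighbours of u in earlier layers are exactly the vertices of B ∪ R
   chosen when u was created (edges created later go to later layers, and
   path edges stay inside a layer), which is what this computes. *)
Fixpoint up (u : node) : seq node :=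
  match u with
  | [::] => [:: [::]]
  | l :: p => (l :: p) :: mask (map (fun a => a != 0) l) (up p)
  end.

Fixpoint valid (t : nat) (x : node) : bool :=
  match x with
  | [::] => true
  | l :: p => [&& valid t p, size l == size (up p),
                  all (fun a => a < 3) l & count (fun a => a != 0) l <= t]
  end.

Definition labof (x y : node) : nat :=
  match x with
  | [::] => 0
  | l :: p => if y \in up p then nth 0 l (index y (up p)) else 0
  end.

(* Left-to-right order inside a layer: children of u come in the block of u
   (blocks ordered as their parents), and inside a block the pairs (B,R) are
   appended in lexicographic order of their label vectors (the paper leaves
   this order unspecified; it is irrelevant to the statement). *)
Fixpoint lexlt (a b : seq nat) : bool :=
  match a, b with
  | x :: a', y :: b' => (x < y) || ((x == y) && lexlt a' b')
  | [::], _ :: _ => true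
  | _, _ => false
  end.

Fixpoint leftof (x y : node) : bool :=
  match x, y with
  | l :: p, l' :: p' => leftof p p' || ((p == p') && lexlt l l')
  | _, _ => false
  end.

Definition path_edge (t : nat) (x y : node) : Prop :=
  valid t x /\ valid t y /\ size x = size y /\
  (leftof x y \/ leftof y x) /\
  ~ (exists z, valid t z /\ size z = size x /\
       ((leftof x z /\ leftof z y) \/ (leftof y z /\ leftof z x))).

Definition black_edge (t : nat) (x y : node) : Prop :=
  path_edge t x y \/
  (valid t x /\ valid t y /\ (labof x y = 1 \/ labof y x = 1)).

Definition red_edge (t : nat) (x y : node) : Prop :=
  valid t x /\ valid t y /\ (labof x y = 2 \/ labof y x = 2).

Definition total_edge (t : nat) (x y : node) : Prop :=
  black_edge t x y \/ red_edge t x y.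
Definition real_edge (t : nat) (x y : node) : Prop := black_edge t x y.

(* v is a descendant of u in T_t (a node is its own descendant). *)
Definition desc (v u : node) : bool := suffix u v.

Definition ndesc (S : seq node) (u : node) : nat := count (fun v => desc v u) S.

(* Main.v *)
Require Import Defs.
From mathcomp Require Import all_boot zify.

Lemma valid_cat t s u : valid t (s ++ u) -> valid t u.
Proof. elim: s => //= a s IH /and4P[h _ _ _]; exact: IH. Qed.

Lemma valid_suffix t u x : valid t x -> suffix u x -> valid t u.
Proof. move=> vx /suffixP[s e]; rewrite e in vx; exact: valid_cat vx. Qed.

Lemma size_up t w : valid t w -> size (up w) <= t.+1.
Proof.
case: w => [|l p] //= /and4P[_ /eqP hs _ hc].
rewrite size_mask ?size_map // count_map.
have -> : count (preim (fun a : nat => a != 0) id) l = count (fun a => a != 0) l by [].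
by [].
Qed.

Fixpoint vecs (m : nat) : seq (seq nat) :=
  if m is m'.+1 then [seq a :: v | a <- [:: 0; 1; 2], v <- vecs m'] else [:: [::]].

Lemma size_vecs m : size (vecs m) = 3 ^ m.
Proof.
elim: m => //= m IH; rewrite !size_cat !size_map IH expnS /=; lia.
Qed.

Lemma mem_vecs l : all (fun a => a < 3) l -> l \in vecs (size l).
Proof.
elim: l => //= a l IH /andP[ha hl].
rewrite !mem_cat.
case: a ha => [|[|[|]]] // _; rewrite ?(mem_map, IH) ?orbT //; by move=> x y [].
Qed.


Lemma argmax (T : eqType) (s : seq T) (f : T -> nat) : s != [::] ->
  exists2 x, x \in s & forall y, y \in s -> f y <= f x.
Proof.
elim: s => //= a s IH _.
case: s IH => [|b s] IH.
  by exists a; rewrite ?inE // => y; rewrite inE => /eqP ->.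
have [//|x xs hx] := IH.
case: (leqP (f a) (f x)) => h.
  exists x; first by rewrite inE xs orbT.
  by move=> y; rewrite inE => /orP[/eqP ->|/hx].
exists a; first by rewrite inE eqxx.
move=> y; rewrite inE => /orP[/eqP ->//|/hx]; lia.
Qed.

Lemma sum_le (T : eqType) (s : seq T) (f : T -> nat) M :
  (forall y, y \in s -> f y <= M) -> \sum_(y <- s) f y <= size s * M.
Proof.
elim: s => [|a s IH] h; first by rewrite big_nil.
rewrite big_cons /= mulSn leq_add ?h ?inE ?eqxx // IH // => y ys.
by apply: h; rewrite inE ys orbT.
Qed.

Lemma mem_sum_ge (T : eqType) (s : seq T) (f : T -> nat) y :
  y \in s -> f y <= \sum_(x <- s) f x.
Proof.
elim: s => // a s IH; rewrite inE big_cons => /orP[/eqP ->|/IH]; lia.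
Qed.

Lemma split_pt t w x : valid t x ->
  desc x w <= (x == w) + \sum_(l <- vecs (size (up w))) desc x (l :: w).
Proof.
move=> vx; rewrite /desc; case sw: (suffix w x) => //=.
move/suffixP: sw => [s2 e].
case: s2 e => [|a s2] e; first by rewrite e eqxx.
rewrite lastI cat_rcons in e.
move: e; set s3 := belast a s2; set l := last a s2 => e.
have hs : suffix (l :: w) x by apply/suffixP; exists s3.
have vl : valid t (l :: w) by apply: valid_suffix vx hs.
move: vl => /= /and4P[_ /eqP hl ha _].
have lC : l \in vecs (size (up w)) by rewrite -hl mem_vecs.
have := @mem_sum_ge _ _ (fun l0 => (suffix (l0 :: w) x : nat)) _ lC.
rewrite /= hs; lia.
Qed.

Lemma split_count t S w : all (valid t) S ->
  ndesc S w <= count_mem w S + \sum_(l <- vecs (size (up w))) ndesc S (l :: w).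
Proof.
rewrite /ndesc; elim: S => [|x S IH] /=.
  by rewrite big1_seq.
move=> /andP[vx vS].
have h1 := @split_pt t w x vx.
have h2 := IH vS.
have -> : \sum_(l <- vecs (size (up w))) count (fun v => desc v (l :: w)) (x :: S)
   = \sum_(l <- vecs (size (up w))) desc x (l :: w) +
     \sum_(l <- vecs (size (up w))) count (fun v => desc v (l :: w)) S.
  by rewrite -big_split.
rewrite addnACA; exact: leq_add h1 h2.
Qed.

Lemma size_le_sumn (S : seq node) x : x \in S -> size x <= sumn (map size S).
Proof. elim: S => // a S IH; rewrite inE /= => /orP[/eqP ->|/IH h]; [exact: leq_addr | exact: leq_trans h (leq_addl _ _)]. Qed.

Theorem lemma4p8 (t : nat) (ht : 0 < t) (n : nat) (hn : 8 <= n) (S : seq node) :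
  uniq S -> size S = n -> all (valid t) S ->
  exists u : node,
    [/\ valid t u,
        n <= 8 * 3 ^ t.+1 * ndesc S u,
        4 * ndesc S u <= n &
        forall v : node, valid t v -> size v = size u -> 4 * ndesc S v <= n].
Proof.
move=> uS sS vS.
pose P := fun i => has (fun x => (i <= size x) && (n < 4 * ndesc S (drop (size x - i) x))) S.
have exP : exists i, P i.
  exists 0; apply/hasP; exists (nth [::] S 0); first by rewrite mem_nth // sS; lia.
  rewrite subn0 drop_size /ndesc /desc.
  rewrite (eq_count (a2 := predT)); last by move=> y; rewrite suffix0s.
  rewrite count_predT sS /=; lia.
have ub : forall i, P i -> i <= sumn (map size S).
  move=> i /hasP[x xS /andP[ix _]]; exact: (leq_trans ix (@size_le_sumn S x xS)).
case: (ex_maxnP exP ub) => i Pi maxi.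
have maxlayer : forall v, size v = i.+1 -> 4 * ndesc S v <= n.
  move=> v sv; rewrite leqNgt; apply/negP => hv.
  have : 0 < ndesc S v by lia.
  rewrite /ndesc -has_count => /hasP[y yS /suffixP[s2 e]].
  have : P i.+1.
    apply/hasP; exists y => //.
    have -> : size y - i.+1 = size s2 by rewrite e size_cat sv; lia.
    by rewrite e drop_size_cat // size_cat sv leq_addl.
  by move/maxi; rewrite ltnn.
move/hasP: Pi => [x xS /andP[ix hw]].
set w := drop (size x - i) x in hw.
have sw : size w = i by rewrite size_drop subKn.
have vw : valid t w.
  apply: (valid_suffix t w x (allP vS x xS)); apply/suffixP; exists (take (size x - i) x).
  by rewrite cat_take_drop.
have hsplit := split_count t S w vS.
have c1 : count_mem w S <= 1 by rewrite count_uniq_mem // leq_b1.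
have ne : vecs (size (up w)) != [::].
  by apply/eqP => e; have := size_vecs (size (up w)); rewrite e /= => /esym/eqP; rewrite expn_eq0.
have [l lC hl] := argmax _ _ (fun l => ndesc S (l :: w)) ne.
have hs := sum_le _ _ _ _ hl; rewrite size_vecs in hs.
have hK : 3 ^ size (up w) <= 3 ^ t.+1 by rewrite leq_exp2l // (size_up t w vw).
have hK2 := leq_mul hK (leqnn (ndesc S (l :: w))).
set f := ndesc S (l :: w) in hs hK2 hl.
set X := 3 ^ t.+1 * f in hK2.
have hX : n <= 8 * X /\ 2 <= X.
  have hs' := leq_trans hsplit (leq_add (leqnn _) hs).
  move: hs' hK2 hw c1 hn; rewrite /X.
  set Y := 3 ^ size (up w) * f; set D := ndesc S w; set Z := 3 ^ t.+1 * f; set C := count_mem w S.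
  clear; lia.
have fpos : 0 < f.
  case: hX => _; rewrite /X; case: (f) => //; rewrite muln0.
  by [].
exists (l :: w); split.
- move: fpos; rewrite /f /ndesc -has_count => /hasP[y yS hy].
  exact: valid_suffix t _ y (allP vS y yS) hy.
- by rewrite -mulnA; case: hX.
- by apply: maxlayer; rewrite /= sw.
- by move=> v _ sv; apply: maxlayer; rewrite sv /= sw.
Qed.
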